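(* Consider the discrete setting described in the context, with constants $0<\gamma_1<\rho_\infty^*$, $\gamma_2>0$, and assume $\lambda=\Delta x/(2\Delta t)\ge v^*/2$. If $(\mathfrak f^n_{ij},\mathfrak g^n_{ij})_{i,j}$ satisfies, for all $i\in\mathcal I$, $j\in\mathcal J$, $$(\rho_\infty^*-\gamma_1)\chi_{1,j}\le\mathfrak f^n_{ij}\le(\rho_\infty^*+\gamma_2)\chi_{1,j},\qquad(\rho_\infty^*+\gamma_2)^{-1}\chi_{2,j}\le\mathfrak g^n_{ij}\le(\rho_\infty^*-\gamma_1)^{-1}\chi_{2,j},$$ then any solution $(\mathfrak f^{n+1}_{ij},\mathfrak g^{n+1}_{ij})_{i,j}$ of the truncated scheme $$\frac{\mathfrak f^{n+1}_{ij}-\mathfrak f^n_{ij}}{\Delta t}+\frac{1}{\Delta x\Delta v}\big(\mathcal F^{n+1}_{i+\frac12,j}-\mathcal F^{n+1}_{i-\frac12,j}\big)=\chi_{1,j}-\tilde\rho^{n+1}_{\mathfrak g,i}\tilde{\mathfrak f}^{n+1}_{ij},\quad \frac{\mathfrak g^{n+1}_{ij}-\mathfrak g^n_{ij}}{\Delta t}+\frac{1}{\Delta x\Delta v}\big(\mathcal G^{n+1}_{i+\frac12,j}-\mathcal G^{n+1}_{i-\frac12,j}\big)=\chi_{2,j}-\tilde\rho^{n+1}_{\mathfrak f,i}\tilde{\mathfrak g}^{n+1}_{ij}$$ satisfies the same bounds (with $n$ replaced by $n+1$) for all $i\in\mathcal I$, $j\in\mathcal J$.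
   Context: Space mesh: $N$ uniform cells of length $\Delta x$, $i\in\mathcal I=\mathbb Z/N\mathbb Z$ (periodic). Velocity mesh: $v^*>0$, $\Delta v=v^*/L$, $j\in\mathcal J=\{-L+1,\dots,L\}$, $v_j=(j-\tfrac12)\Delta v$. Time step $\Delta t>0$; $\lambda=\Delta x/(2\Delta t)$. $\rho_\infty^*>0$ a given constant. For $k=1,2$: $\chi_{k,j}>0$, $\chi_{k,j}=\chi_{k,1-j}$, $\sum_j\Delta v\chi_{k,j}=1$. Fluxes: $\mathcal F^{n+1}_{i+\frac12,j}=\Delta v\frac{v_j}{2}(\mathfrak f^{n+1}_{i+1,j}+\mathfrak f^{n+1}_{ij})-\Delta v\lambda(\mathfrak f^{n+1}_{i+1,j}-\mathfrak f^{n+1}_{ij})$, $\mathcal G$ likewise with $\mathfrak g$. Truncations: $\tilde{\mathfrak f}_{ij}=\min\big(\max(\mathfrak f_{ij},(\rho_\infty^*-\gamma_1)\chi_{1,j}),(\rho_\infty^*+\gamma_2)\chi_{1,j}\big)$, $\tilde{\mathfrak g}_{ij}=\min\big(\max(\mathfrak g_{ij},(\rho_\infty^*+\gamma_2)^{-1}\chi_{2,j}),(\rho_\infty^*-\gamma_1)^{-1}\chi_{2,j}\big)$; $\tilde\rho_{\mathfrak f,i}=\sum_j\Delta v\,\tilde{\mathfrak f}_{ij}$, $\tilde\rho_{\mathfrak g,i}=\sum_j\Delta v\,\tilde{\mathfrak g}_{ij}$. *)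

(* Defs.v *)
(* the statement is purely algebraic/order-theoretic,
   so it is stated over an arbitrary real field R. *)
From mathcomp Require Import all_boot all_order all_algebra.
Set Implicit Arguments. Unset Strict Implicit. Unset Printing Implicit Defensive.
Import Order.TTheory GRing.Theory Num.Theory.
Local Open Scope ring_scope.

(* Space index i : 'I_N  (periodic: i+1 = ordS i, i-1 = ord_pred i).
   Velocity index k : 'I_(2L) encodes j = k - L + 1 in {-L+1,...,L};
   the reflection j |-> 1 - j is k |-> rev_ord k. *)

Definition jidx (L : nat) (k : 'I_(2 * L)) : int := (k : int) - (L : int) + 1.

Definition vel {R : realFieldType} (L : nat) (dv : R) (k : 'I_(2 * L)) : R :=
  ((jidx k)%:~R - 2^-1) * dv.

(* numerical flux at the interface i+1/2 *)
Definition flux {R : realFieldType} (N L : nat) (dv lam : R)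
  (f : 'I_N -> 'I_(2 * L) -> R) (i : 'I_N) (k : 'I_(2 * L)) : R :=
  dv * (vel dv k / 2) * (f (ordS i) k + f i k) - dv * lam * (f (ordS i) k - f i k).

Definition trunc {R : realFieldType} (lo hi x : R) : R := Num.min (Num.max x lo) hi.

Definition dens {R : realFieldType} (N L : nat) (dv : R)
  (h : 'I_N -> 'I_(2 * L) -> R) (i : 'I_N) : R := \sum_(k < 2 * L) dv * h i k.

(* Main.v *)
Require Import Defs.
From mathcomp Require Import all_boot all_order all_algebra.
From mathcomp Require Import ring lra.
Import Order.TTheory GRing.Theory Num.Theory.
Local Open Scope ring_scope.

Lemma maxpr (R : realFieldType) (N : nat) (u w S : 'I_N -> R) (a b U : R) :
  0 <= a -> 0 <= b ->
  (forall i, u i + a * (u i - u (ordS i)) + b * (u i - u (ord_pred i)) = w i + S i) ->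
  (forall i, w i <= U) -> (forall i, U < u i -> S i <= 0) -> forall i, u i <= U.
Proof.
move=> ha hb E hw hS i.
case: (@arg_maxP _ R _ i xpredT u isT) => m _ Hm.
apply: (le_trans (Hm i isT)).
rewrite leNgt; apply/negP => hU.
have h1 := Hm (ordS m) isT; have h2 := Hm (ord_pred m) isT.
have := E m; have := hw m; have := hS m hU.
have : 0 <= a * (u m - u (ordS m)) by apply: mulr_ge0; rewrite // subr_ge0.
have : 0 <= b * (u m - u (ord_pred m)) by apply: mulr_ge0; rewrite // subr_ge0.
lra.
Qed.

Lemma minpr (R : realFieldType) (N : nat) (u w S : 'I_N -> R) (a b U : R) :
  0 <= a -> 0 <= b ->
  (forall i, u i + a * (u i - u (ordS i)) + b * (u i - u (ord_pred i)) = w i + S i) ->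
  (forall i, U <= w i) -> (forall i, u i < U -> 0 <= S i) -> forall i, U <= u i.
Proof.
move=> ha hb E hw hS i.
rewrite -lerN2.
apply: (@maxpr R N (fun i => - u i) (fun i => - w i) (fun i => - S i) a b (- U)) => //.
- move=> j; rewrite -(opprD (w j)) -E; ring.
- by move=> j; rewrite lerN2.
- by move=> j; rewrite ltrN2 oppr_le0; apply: hS.
Qed.

Lemma trunc_ge (R : realFieldType) (lo hi x : R) : lo <= hi -> lo <= trunc lo hi x.
Proof. by move=> h; rewrite /trunc le_min h le_max lexx orbT. Qed.
Lemma trunc_le (R : realFieldType) (lo hi x : R) : trunc lo hi x <= hi.
Proof. by rewrite /trunc ge_min lexx orbT. Qed.
Lemma trunc_lo (R : realFieldType) (lo hi x : R) : lo <= hi -> x < lo -> trunc lo hi x = lo.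
Proof. move=> h1 h2; rewrite /trunc maxEle minEle; case: ifP; case: ifP => //; lra. Qed.
Lemma trunc_hi (R : realFieldType) (lo hi x : R) : lo <= hi -> hi < x -> trunc lo hi x = hi.
Proof. move=> h1 h2; rewrite /trunc maxEle minEle; case: ifP; case: ifP => //; lra. Qed.

Lemma sum_lb (R : realFieldType) n (dv c : R) (chi h : 'I_n -> R) :
  0 <= dv -> \sum_(k < n) dv * chi k = 1 -> (forall k, c * chi k <= h k) ->
  c <= \sum_(k < n) dv * h k.
Proof.
move=> hd hs hh.
have -> : c = \sum_(k < n) dv * (c * chi k).
  by rewrite -[LHS]mulr1 -hs mulr_sumr; apply: eq_bigr => k _; ring.
by apply: ler_sum => k _; apply: ler_wpM2l.
Qed.
Lemma sum_ub (R : realFieldType) n (dv c : R) (chi h : 'I_n -> R) :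
  0 <= dv -> \sum_(k < n) dv * chi k = 1 -> (forall k, h k <= c * chi k) ->
  \sum_(k < n) dv * h k <= c.
Proof.
move=> hd hs hh.
have -> : c = \sum_(k < n) dv * (c * chi k).
  by rewrite -[LHS]mulr1 -hs mulr_sumr; apply: eq_bigr => k _; ring.
by apply: ler_sum => k _; apply: ler_wpM2l.
Qed.

Lemma vel_bound (R : realFieldType) (L : nat) (vstar : R) (k : 'I_(2 * L)) :
  (0 < L)%N -> 0 < vstar ->
  - vstar <= vel (vstar / L%:R) k <= vstar.
Proof.
move=> hL hv.
have hLr : 0 < (L%:R : R) by rewrite ltr0n.
have hk : (k%:R : R) + 1 <= 2 * L%:R.
  have -> : (2 : R) * L%:R = (2 * L)%:R by rewrite natrM.
  by rewrite natr1 ler_nat; exact: ltn_ord.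
have hk0 : (0 : R) <= k%:R by [].
have ej : (jidx k)%:~R = (k%:R : R) - L%:R + 1.
  by rewrite /jidx rmorphD rmorphB /= !pmulrn.
set t := vstar / L%:R.
have ht : L%:R * t = vstar by rewrite /t mulrC divfK // gt_eqF.
have ht0 : 0 < t by rewrite /t divr_gt0.
rewrite /vel ej -/t.
have h2 : (2 : R)^-1 * 2 = 1 by rewrite mulVf // pnatr_eq0.
have hh : 0 < (2 : R)^-1 by rewrite invr_gt0.
have hh1 : (2 : R)^-1 < 1 by lra.
set h := (2 : R)^-1 in h2 hh hh1 *.
have a1 : 0 <= (k%:R + 1 - h) * t by apply: mulr_ge0; lra.
have a2 : 0 <= (2 * L%:R - k%:R - 1 + h) * t by apply: mulr_ge0; lra.
apply/andP; split; lra.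
Qed.

Lemma scheme_id (R : realFieldType) N L (dv dx dt : R) (u un : 'I_N -> 'I_(2 * L) -> R) rhs i k :
  dx != 0 -> dt != 0 -> dv != 0 ->
  (u i k - un i k) / dt + (dx * dv)^-1 *
     (flux dv (dx / (2 * dt)) u i k - flux dv (dx / (2 * dt)) u (ord_pred i) k) = rhs ->
  u i k + (dt / dx * (dx / (2 * dt) - vel dv k / 2)) * (u i k - u (ordS i) k)
        + (dt / dx * (dx / (2 * dt) + vel dv k / 2)) * (u i k - u (ord_pred i) k)
  = un i k + dt * rhs.
Proof. move=> h1 h2 h3 <-; rewrite /flux ord_predK; field; rewrite ?h1 ?h2 ?h3 //= pnatr_eq0. Qed.

Lemma src_neg (R : realFieldType) (dt chi c D : R) :
  0 < dt -> 0 < chi -> 0 < c -> c^-1 <= D -> dt * (chi - D * (c * chi)) <= 0.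
Proof.
move=> h1 h2 h3 h4.
have e : c^-1 * c = 1 by rewrite mulVf // gt_eqF.
have a : 0 <= (D - c^-1) * c by apply: mulr_ge0; lra.
have b : 0 <= (D * c - 1) * chi * dt by apply: mulr_ge0; [apply: mulr_ge0|]; lra.
lra.
Qed.
Lemma src_pos (R : realFieldType) (dt chi c D : R) :
  0 < dt -> 0 < chi -> 0 < c -> D <= c^-1 -> 0 <= dt * (chi - D * (c * chi)).
Proof.
move=> h1 h2 h3 h4.
have e : c^-1 * c = 1 by rewrite mulVf // gt_eqF.
have a : 0 <= (c^-1 - D) * c by apply: mulr_ge0; lra.
have b : 0 <= (1 - D * c) * chi * dt by apply: mulr_ge0; [apply: mulr_ge0|]; lra.
lra.
Qed.
Theorem lemma5p5 (R : realFieldType) (N L : nat) (vstar dx dt rho g1 g2 : R)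
  (chi1 chi2 : 'I_(2 * L) -> R)
  (fn gn f g : 'I_N -> 'I_(2 * L) -> R) :
  (0 < L)%N -> 0 < vstar -> 0 < dx -> 0 < dt -> 0 < rho ->
  0 < g1 -> g1 < rho -> 0 < g2 ->
  vstar / 2 <= dx / (2 * dt) ->
  (forall k, 0 < chi1 k) -> (forall k, 0 < chi2 k) ->
  (forall k, chi1 k = chi1 (rev_ord k)) -> (forall k, chi2 k = chi2 (rev_ord k)) ->
  \sum_(k < 2 * L) (vstar / L%:R) * chi1 k = 1 ->
  \sum_(k < 2 * L) (vstar / L%:R) * chi2 k = 1 ->
  (forall i k, (rho - g1) * chi1 k <= fn i k <= (rho + g2) * chi1 k) ->
  (forall i k, (rho + g2)^-1 * chi2 k <= gn i k <= (rho - g1)^-1 * chi2 k) ->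
  (forall i k,
     (f i k - fn i k) / dt
     + (dx * (vstar / L%:R))^-1 *
         (flux (vstar / L%:R) (dx / (2 * dt)) f i k
          - flux (vstar / L%:R) (dx / (2 * dt)) f (ord_pred i) k)
     = chi1 k
       - dens (vstar / L%:R)
           (fun i' k' => trunc ((rho + g2)^-1 * chi2 k') ((rho - g1)^-1 * chi2 k') (g i' k')) i
         * trunc ((rho - g1) * chi1 k) ((rho + g2) * chi1 k) (f i k)) ->
  (forall i k,
     (g i k - gn i k) / dt
     + (dx * (vstar / L%:R))^-1 *
         (flux (vstar / L%:R) (dx / (2 * dt)) g i k
          - flux (vstar / L%:R) (dx / (2 * dt)) g (ord_pred i) k)
     = chi2 k
       - dens (vstar / L%:R)
           (fun i' k' => trunc ((rho - g1) * chi1 k') ((rho + g2) * chi1 k') (f i' k')) i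
         * trunc ((rho + g2)^-1 * chi2 k) ((rho - g1)^-1 * chi2 k) (g i k)) ->
  forall i k,
    ((rho - g1) * chi1 k <= f i k <= (rho + g2) * chi1 k) /\
    ((rho + g2)^-1 * chi2 k <= g i k <= (rho - g1)^-1 * chi2 k).
Proof.
move=> hL hv hdx hdt hr hg1 hg1r hg2 hlam hc1 hc2 _ _ hs1 hs2 hfn hgn Ef Eg i k.
have hLr : 0 < (L%:R : R) by rewrite ltr0n.
have hdv : 0 < vstar / L%:R by rewrite divr_gt0.
have hvb := @vel_bound R L vstar k hL hv.
set v := vel _ k in hvb.
have ha : 0 <= dt / dx * (dx / (2 * dt) - v / 2).
  apply: mulr_ge0; [by rewrite divr_ge0 // ltW | lra].
have hb : 0 <= dt / dx * (dx / (2 * dt) + v / 2).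
  apply: mulr_ge0; [by rewrite divr_ge0 // ltW | lra].
have hinv : (rho + g2)^-1 <= (rho - g1)^-1 by rewrite lef_pV2 ?posrE; lra.
have hrg1 : 0 < rho - g1 by lra.
have hrg2 : 0 < rho + g2 by lra.
have hf1 : forall k', (rho - g1) * chi1 k' <= (rho + g2) * chi1 k'.
  by move=> k'; apply: ler_wpM2r; [exact: ltW | lra].
have hf2 : forall k', (rho + g2)^-1 * chi2 k' <= (rho - g1)^-1 * chi2 k'.
  by move=> k'; apply: ler_wpM2r; [exact: ltW | lra].
have hDg : forall j, (rho + g2)^-1 <= dens (vstar / L%:R)
           (fun i' k' => trunc ((rho + g2)^-1 * chi2 k') ((rho - g1)^-1 * chi2 k') (g i' k')) j <= (rho - g1)^-1.
  move=> j; rewrite /dens; apply/andP; split.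
    by apply: (@sum_lb R _ _ _ chi2 (fun k' => trunc ((rho + g2)^-1 * chi2 k') ((rho - g1)^-1 * chi2 k') (g j k')) (ltW hdv) hs2) => k'; apply: trunc_ge.
  by apply: (@sum_ub R _ _ _ chi2 (fun k' => trunc ((rho + g2)^-1 * chi2 k') ((rho - g1)^-1 * chi2 k') (g j k')) (ltW hdv) hs2) => k'; apply: trunc_le.
have hDf : forall j, (rho - g1) <= dens (vstar / L%:R)
           (fun i' k' => trunc ((rho - g1) * chi1 k') ((rho + g2) * chi1 k') (f i' k')) j <= (rho + g2).
  move=> j; rewrite /dens; apply/andP; split.
    by apply: (@sum_lb R _ _ _ chi1 (fun k' => trunc ((rho - g1) * chi1 k') ((rho + g2) * chi1 k') (f j k')) (ltW hdv) hs1) => k'; apply: trunc_ge.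
  by apply: (@sum_ub R _ _ _ chi1 (fun k' => trunc ((rho - g1) * chi1 k') ((rho + g2) * chi1 k') (f j k')) (ltW hdv) hs1) => k'; apply: trunc_le.
have nz1 : dx != 0 by rewrite gt_eqF.
have nz2 : dt != 0 by rewrite gt_eqF.
have nz3 : vstar / L%:R != 0 by rewrite gt_eqF.
have Ef' := fun j => @scheme_id R N L _ _ _ _ _ _ j k nz1 nz2 nz3 (Ef j k).
have Eg' := fun j => @scheme_id R N L _ _ _ _ _ _ j k nz1 nz2 nz3 (Eg j k).
split; apply/andP; split.
- apply: (@minpr R N _ _ _ _ _ _ ha hb Ef') => [j|j hj]; first by case/andP: (hfn j k).
  rewrite trunc_lo //; apply: src_pos => //; by case/andP: (hDg j).
- apply: (@maxpr R N _ _ _ _ _ _ ha hb Ef') => [j|j hj]; first by case/andP: (hfn j k).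
  rewrite trunc_hi //; apply: src_neg => //; by case/andP: (hDg j).
- apply: (@minpr R N _ _ _ _ _ _ ha hb Eg') => [j|j hj]; first by case/andP: (hgn j k).
  rewrite trunc_lo //; apply: src_pos => //; first by rewrite invr_gt0.
  by rewrite invrK; case/andP: (hDf j).
- apply: (@maxpr R N _ _ _ _ _ _ ha hb Eg') => [j|j hj]; first by case/andP: (hgn j k).
  rewrite trunc_hi //; apply: src_neg => //; first by rewrite invr_gt0.
  by rewrite invrK; case/andP: (hDf j).
Qed.
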